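(* Let $n,\lambda,\mu$ be positive integers with $\mu>\lambda$, and let $\mathcal{A}$ be a strong path decomposition of $\lambda K_n$. Then $\lambda K_n$ is strongly $2$-extendible with respect to $(\mathcal{A},\mu K_n)$ if and only if (B1) $2|\mathcal{S}_0(\mathcal{A})|+|\mathcal{S}_1(\mathcal{A})|\le(\mu-\lambda)\frac{n(n-1)}{2}$, and (B2) for every pair of distinct vertices $u,v$, $|\mathcal{S}_0(\mathcal{A})|+|\mathcal{S}_1(u,v,\mathcal{A})|\le(\mu-\lambda)\left(\frac{n(n-1)}{2}-1\right)$.
   Context: Graphs may have multiple edges. $\lambda K_n$ is the loopless multigraph on $n$ vertices with every pair of distinct vertices joined by exactly $\lambda$ edges; $\lambda K_n$ is regarded as a subgraph of $\mu K_n$ on the same vertex set, and $\mu K_n\setminus\lambda K_n$ denotes the graph obtained by deleting the edges of $\lambda K_n$. A decomposition of size $k$ of a graph $G$ is an ordered $k$-tuple $(G(1),\dots,G(k))$ of spanning subgraphs of $G$ (colour classes; possibly edgeless) with pairwise disjoint edge sets whose union is $E(G)$. A path decomposition is one in which every colour class is a vertex-disjoint union of paths and cycles (two parallel edges form a cycle of length 2); it is strong if no colour class contains a cycle. $\mathcal{S}_i(\mathcal{A})$ is the set of colour classes of $\mathcal{A}$ with exactly $i$ edges, and $\mathcal{S}_1(u,v,\mathcal{A})$ is the set of those in $\mathcal{S}_1(\mathcal{A})$ whose single edge joins $u$ and $v$. For a graph $G\subseteq H$, a strong path decomposition $\mathcal{A}$ of $G$ with $k$ colour classes and a positive integer $\alpha$,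 $G$ is strongly $\alpha$-extendible with respect to $(\mathcal{A},H)$ if there is a graph $F\subseteq H\setminus G$ and a strong path decomposition $\mathcal{A}^*$ of $G\cup F$ of size $k$ whose restriction to $G$ is $\mathcal{A}$ and each $\mathcal{A}^*(i)$ has at least $\alpha$ edges. *)

(* Defs.v *)
From mathcomp Require Import all_boot.
Set Implicit Arguments. Unset Strict Implicit. Unset Printing Implicit Defensive.

(* The edges of mu K_n are labelled triples
   (u, v, j) with u < v (the unordered pair {u,v}) and j < mu (which of the
   mu parallel copies).  A (sub)graph of mu K_n on the same vertex set is a
   set of such edges. *)
Definition edge (n mu : nat) := ('I_n * 'I_n * 'I_mu)%type.

Definition valid_edge n mu (e : edge n mu) : bool := (e.1.1 < e.1.2)%N.

Definition joins n mu (e : edge n mu) (u v : 'I_n) : bool :=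
  ((e.1.1 == u) && (e.1.2 == v)) || ((e.1.1 == v) && (e.1.2 == u)).

(* the edge set of lambda K_n, viewed inside mu K_n: copies j < lambda *)
Definition lamK (n mu lam : nat) : {set edge n mu} :=
  [set e | valid_edge e && (e.2 < lam)%N].

Definition fullK (n mu : nat) : {set edge n mu} := lamK n mu mu.

Definition deg n mu (S : {set edge n mu}) (v : 'I_n) : nat :=
  #|[set e in S | (e.1.1 == v) || (e.1.2 == v)]|.

(* S contains a cycle (of length m.+2 >= 2; two parallel edges form a
   cycle of length 2): distinct vertices v_0..v_{m+1}, distinct edges
   e_0..e_{m+1} of S, e_i joining v_i and v_{i+1 mod (m+2)}. *)
Definition has_cycle n mu (S : {set edge n mu}) : Prop :=
  exists (m : nat) (vs : 'I_m.+2 -> 'I_n) (es : 'I_m.+2 -> edge n mu),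
    injective vs /\ injective es /\
    forall i, es i \in S /\ joins (es i) (vs i) (vs (ordS i)).

Definition decomposition n mu (G : {set edge n mu}) k
    (A : 'I_k -> {set edge n mu}) : Prop :=
  (forall i j, i != j -> [disjoint A i & A j]) /\
  (forall e, e \in G <-> exists i, e \in A i).

(* a loopless multigraph is a vertex-disjoint union of paths and cycles
   iff every vertex has degree at most 2 *)
Definition path_decomposition n mu (G : {set edge n mu}) k
    (A : 'I_k -> {set edge n mu}) : Prop :=
  decomposition G A /\ forall i v, (deg (A i) v <= 2)%N.

Definition strong_path_decomposition n mu (G : {set edge n mu}) k
    (A : 'I_k -> {set edge n mu}) : Prop :=
  path_decomposition G A /\ forall i, ~ has_cycle (A i).

Definition strongly_extendible (alpha : nat) n mu (G H : {set edge n mu}) k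
    (A : 'I_k -> {set edge n mu}) : Prop :=
  exists (F : {set edge n mu}) (Astar : 'I_k -> {set edge n mu}),
    F \subset H :\: G /\
    strong_path_decomposition (G :|: F) Astar /\
    (forall i, Astar i :&: G = A i) /\
    (forall i, (alpha <= #|Astar i|)%N).

Definition nS (i : nat) n mu k (A : 'I_k -> {set edge n mu}) : nat :=
  #|[set j : 'I_k | #|A j| == i]|.

Definition nS1uv n mu k (A : 'I_k -> {set edge n mu}) (u v : 'I_n) : nat :=
  #|[set j : 'I_k | (#|A j| == 1) && [forall e in A j, joins e u v]]|.

(* Main.v *)
Require Import Defs.
From mathcomp Require Import all_boot.
From mathcomp Require Import zify.
Set Implicit Arguments. Unset Strict Implicit. Unset Printing Implicit Defensive.


Definition cntP (T : finType) (J : {set T}) (P : pred T) : nat := #|[set x in J | P x]|.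

Lemma cntP_D1 (T : finType) (J : {set T}) (P : pred T) x :
  x \in J -> cntP J P = cntP (J :\ x) P + P x.
Proof.
move=> xJ; rewrite /cntP (cardsD1 x [set y in J | P y]) inE xJ /= addnC.
congr (_ + _); apply: eq_card => y; rewrite !inE; by rewrite andbA.
Qed.

Lemma cntP_mono (T : finType) (J : {set T}) (P Q : pred T) :
  (forall x, x \in J -> P x -> Q x) -> cntP J P <= cntP J Q.
Proof.
move=> H; apply: subset_leq_card; apply/subsetP => x; rewrite !inE => /andP[xJ Px].
by rewrite xJ (H x xJ Px).
Qed.

Lemma cntP_le (T : finType) (J : {set T}) (P : pred T) : cntP J P <= #|J|.
Proof. by apply: subset_leq_card; apply/subsetP=> x; rewrite inE => /andP[]. Qed.

Lemma cntP_disj (T : finType) (J : {set T}) (P Q R : pred T) :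
  (forall x, x \in J -> P x -> Q x -> False) ->
  (forall x, x \in J -> P x || Q x -> R x) -> cntP J P + cntP J Q <= cntP J R.
Proof.
move=> H1 H2; rewrite /cntP -cardsUI.
have -> : [set x in J | P x] :&: [set x in J | Q x] = set0.
  apply/setP => x; rewrite !inE; apply/negbTE/negP => /andP[/andP[xJ Px] /andP[_ Qx]].
  exact: (H1 x xJ Px Qx).
rewrite cards0 addn0; apply: subset_leq_card; apply/subsetP => x.
by rewrite !inE => /orP[]/andP[xJ h]; rewrite xJ H2 // h ?orbT.
Qed.

Lemma cntP_disjT (T : finType) (J : {set T}) (P Q : pred T) :
  (forall x, x \in J -> P x -> Q x -> False) -> cntP J P + cntP J Q <= #|J|.
Proof.
move=> H; apply: (leq_trans (cntP_disj (R := predT) H _)) => //.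
exact: cntP_le.
Qed.

Lemma cntP_pos (T : finType) (J : {set T}) (P : pred T) :
  0 < cntP J P -> exists2 x, x \in J & P x.
Proof. by rewrite card_gt0 => /set0Pn[x]; rewrite inE => /andP[]; eauto. Qed.

Lemma cntP_lt (T : finType) (J : {set T}) (P : pred T) :
  cntP J P < #|J| -> exists2 x, x \in J & ~~ P x.
Proof.
move=> H; case: (boolP [exists x in J, ~~ P x]) => [/existsP[x /andP[]]|]; first by eauto.
rewrite negb_exists_in => /forall_inP allP.
have E : [set x in J | P x] = J.
  apply/setP => x; rewrite inE; case xJ: (x \in J) => //=.
  by have := allP x xJ; rewrite negbK.
by rewrite /cntP E ltnn in H.
Qed.

Lemma disj_of (T : finType) (A B : {set T}) :
  (forall x, x \in A -> x \notin B) -> [disjoint A & B].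
Proof.
move=> H; rewrite -setI_eq0; apply/eqP/setP => x; rewrite !inE.
by case: (boolP (x \in A)) => // /H /negbTE ->.
Qed.

Lemma cntP_C (T : finType) (J : {set T}) (P : pred T) :
  cntP J P + cntP J (fun x => ~~ P x) = #|J|.
Proof.
rewrite /cntP -cardsUI.
have -> : [set x in J | P x] :&: [set x in J | ~~ P x] = set0.
  by apply/setP => x; rewrite !inE; case: (P x); rewrite ?andbF.
rewrite cards0 addn0; apply: eq_card => x; rewrite !inE.
by case: (x \in J); case: (P x).
Qed.

Lemma cntP0 (T : finType) (P : pred T) : cntP set0 P = 0.
Proof. by apply/eqP; rewrite cards_eq0; apply/eqP/setP => x; rewrite !inE. Qed.

Lemma pack (I E : finType) (Y : I -> {set E}) (P : pred I) :
  (forall i j, i != j -> [disjoint Y i & Y j]) ->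
  forall T : {set I}, (forall i, i \in T -> (P i -> 2 <= #|Y i|) /\ 1 <= #|Y i|) ->
  2 * cntP T P + cntP T (fun i => ~~ P i) <= #|\bigcup_(i in T) Y i|.
Proof.
move=> hdis T; have [m] := ubnP #|T|; elim: m T => // m IH T hm hT.
case: (set_0Vmem T) => [->|[i iT]]; first by rewrite !cntP0.
rewrite (big_setD1 i iT) /= (cntP_D1 P iT) (cntP_D1 (fun i => ~~ P i) iT).
have D : Y i :&: \bigcup_(j in T :\ i) Y j = set0.
  apply/setP => x; rewrite !inE; apply/negbTE/negP => /andP[xi /bigcupP[j jT xj]].
  have nij : i != j by move: jT; rewrite !inE eq_sym => /andP[].
  by rewrite (disjointFr (hdis i j nij) xi) in xj.
have := cardsUI (Y i) (\bigcup_(j in T :\ i) Y j); rewrite D cards0 addn0 => ->.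
have hm' : #|T :\ i| < m by move: hm; rewrite (cardsD1 i T) iT.
have := IH (T :\ i) hm' (fun j jT => hT j (subsetP (subD1set T i) j jT)).
have [h2 h1] := hT i iT.
by case: (P i) h2 => /= h2; [have := h2 isT|]; lia.
Qed.


Lemma extend_gen (E P I : finType) (pr : E -> P) (t0 t1 : pred I) (fb : I -> P -> bool)
 (h01 : forall i, t0 i -> t1 i -> False)
 (hfb : forall i p q, t1 i -> fb i p -> fb i q -> p = q)
 (hfb1 : forall i, t1 i -> exists p, fb i p) :
 forall (J : {set I}) (Av : {set E}),
  (forall i, i \in J -> t0 i || t1 i) ->
  2 * cntP J t0 + cntP J t1 <= #|Av| ->
  (forall p, cntP J t0 + cntP J (fun i => t1 i && fb i p) + cntP Av (fun e => pr e == p) <= #|Av|) ->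
  exists X : I -> {set E}, (forall i, X i \subset Av) /\
    (forall i j, i != j -> [disjoint X i & X j]) /\ (forall i, i \notin J -> X i = set0) /\
    (forall i, i \in J -> t0 i -> exists e1 e2, X i = [set e1; e2] /\ pr e1 != pr e2) /\
    (forall i, i \in J -> t1 i -> exists e, X i = [set e] /\ ~~ fb i (pr e)).
Proof.
move=> J; have [m] := ubnP #|J|; elim: m J => // m IH J hm Av hJ h1 h2.
case: (set_0Vmem J) => [->|[i iJ]].
  exists (fun _ => set0); split; first by move=> i; exact: sub0set.
  split; first by move=> i j _; rewrite -setI_eq0 set0I.
  by split; [|split] => // i; rewrite inE.
have hm' : #|J :\ i| < m by move: hm; rewrite (cardsD1 i J) iJ.
have hJ' : forall j, j \in J :\ i -> t0 j || t1 j.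
  by move=> j; rewrite inE => /andP[_ /hJ].
have s1pS : forall r, cntP J (fun i => t1 i && fb i r) <= cntP J t1.
  by move=> r; apply: cntP_mono => x _ /andP[].
have s1p2 : forall r r', r != r' -> cntP J (fun i => t1 i && fb i r) +
    cntP J (fun i => t1 i && fb i r') <= cntP J (fun i => t1 i && (fb i r || fb i r')).
  move=> r r' nr; apply: cntP_disj => [x _ /andP[t f] /andP[_ f']|x _ /orP[]/andP[-> ->]] //.
    by move: nr; rewrite (hfb x r r' t f f') eqxx.
  by rewrite orbT.
have s1p3 : forall r r' r'', r != r' -> r'' != r -> r'' != r' ->
    cntP J (fun i => t1 i && fb i r) + cntP J (fun i => t1 i && fb i r') +
    cntP J (fun i => t1 i && fb i r'') <= cntP J t1.
  move=> r r' r'' nr nr1 nr2; apply: (leq_trans (leq_add (s1p2 r r' nr) (leqnn _))).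
  apply: cntP_disj => [x _ /andP[t /orP[]f] /andP[_ f'']|x _ /orP[]/andP[-> _]] //.
    by move: nr1; rewrite (hfb x r'' r t f'' f) eqxx.
  by move: nr2; rewrite (hfb x r'' r' t f'' f) eqxx.
have cap2 : forall r r', r != r' -> cntP Av (fun e => pr e == r) +
    cntP Av (fun e => pr e == r') <= cntP Av (fun e => (pr e == r) || (pr e == r')).
  move=> r r' nr; apply: cntP_disj => [x _ /eqP f /eqP f'|x _ //].
  by move: nr; rewrite -f -f' eqxx.
have cap3 : forall r r' r'', r != r' -> r'' != r -> r'' != r' ->
    cntP Av (fun e => pr e == r) + cntP Av (fun e => pr e == r') +
    cntP Av (fun e => pr e == r'') <= #|Av|.
  move=> r r' r'' nr nr1 nr2; apply: (leq_trans (leq_add (cap2 r r' nr) (leqnn _))).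
  apply: cntP_disjT => x _ /orP[]/eqP f /eqP f''.
    by move: nr1; rewrite -f -f'' eqxx.
  by move: nr2; rewrite -f -f'' eqxx.
have cap2' : forall r r', r != r' -> cntP Av (fun e => pr e == r) +
    cntP Av (fun e => pr e == r') <= #|Av|.
  move=> r r' nr; apply: cntP_disjT => x _ /eqP f /eqP f'.
  by move: nr; rewrite -f -f' eqxx.
have E0 := cntP_D1 t0 iJ; have E1 := cntP_D1 t1 iJ.
have Ep := fun r => cntP_D1 (fun i => t1 i && fb i r) iJ.
case/orP: (hJ i iJ) => ti.
-
  have t1i : t1 i = false by apply/negbTE/negP => /(h01 i ti).
  rewrite ti in E0; rewrite t1i in E1.
  have s0pos : 0 < cntP J t0 by lia.
  pose tight r := cntP J t0 + cntP J (fun i => t1 i && fb i r) + cntP Av (fun e => pr e == r) == #|Av|.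
  have capt : forall r, tight r -> 0 < cntP Av (fun e => pr e == r).
    by move=> r /eqP tr; have := s1pS r; lia.
  have [e1 e1Av te1] : exists2 e1, e1 \in Av & forall r, tight r -> tight (pr e1).
    case: (pickP tight) => [r tr|none].
      have [e eAv /eqP pe] := cntP_pos (capt r tr); exists e => //; by rewrite pe.
    have : 0 < #|Av| by lia.
    rewrite card_gt0 => /set0Pn[e eAv]; exists e => // r tr.
    by have := none r; rewrite tr.
  have [e2 e2Av [ne12 te2]] : exists2 e2, e2 \in Av & (pr e2 != pr e1 /\
      forall r, r != pr e1 -> tight r -> r = pr e2).
    case: (pickP (fun r => (r != pr e1) && tight r)) => [r /andP[nr tr]|none].
    + have [e eAv /eqP pe] := cntP_pos (capt r tr); exists e => //; split; first by rewrite pe.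
      move=> r' nr' tr'; rewrite pe; apply/eqP; apply: contraT => nrr'.
      have t1' := te1 r tr.
      have := s1p3 (pr e1) r r'; rewrite eq_sym nr nr' nrr' => /(_ isT isT isT).
      have := cap3 (pr e1) r r'; rewrite eq_sym nr nr' nrr' => /(_ isT isT isT).
      move: t1' tr tr'; rewrite /tight => /eqP ? /eqP ? /eqP ?. lia.
    + have : cntP Av (fun e => pr e == pr e1) < #|Av| by have := h2 (pr e1); lia.
      case/cntP_lt => e eAv ne; exists e => //; split => // r nr tr.
      by have := none r; rewrite nr tr.
  have e2Av1 : e2 \in Av :\ e1.
    by rewrite !inE e2Av andbT; apply: contraNneq ne12 => ->.
  have CAv : #|Av| = #|Av :\ e1 :\ e2| + 2.
    by rewrite (cardsD1 e1 Av) e1Av (cardsD1 e2 (Av :\ e1)) e2Av1; lia.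
  have H2' : forall r, cntP (J :\ i) t0 + cntP (J :\ i) (fun i => t1 i && fb i r) + cntP (Av :\ e1 :\ e2) (fun e => pr e == r) <= #|Av :\ e1 :\ e2|.
    move=> r; have := cntP_D1 (fun e => pr e == r) e2Av1;
      have := cntP_D1 (fun e => pr e == r) e1Av; have := Ep r; have := h2 r.
    rewrite /= t1i /=.
    case: (eqVneq (pr e1) r) => [<-|ne1]; first by lia.
    case: (eqVneq (pr e2) r) => [<-|ne2]; first by lia.
    have nt : ~~ tight r.
      apply/negP => tr; have := te2 r; rewrite eq_sym ne1 => /(_ isT tr) Er.
      by move: ne2; rewrite Er eqxx.
    move: nt; rewrite /tight. lia.
  have [X [hsub [hdis [hout [h0 h1']]]]] := IH (J :\ i) hm' (Av :\ e1 :\ e2) hJ' ltac:(lia) H2'.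
  have notin : forall j x, x \in X j -> (x != e1) && (x != e2).
    move=> j x /(subsetP (hsub j)); rewrite !inE => /andP[-> /andP[-> _]] //.
  exists (fun j => if j == i then [set e1; e2] else X j); split.
    move=> j; case: ifP => _; last exact: subset_trans (hsub j) (subset_trans (subD1set _ _) (subD1set _ _)).
    by apply/subsetP => x; rewrite !inE => /orP[]/eqP->.
  split.
    move=> j j' njj'; case: ifP => [/eqP ji|ji]; case: ifP => [/eqP j'i|j'i].
    - by move: njj'; rewrite ji j'i eqxx.
    - apply: disj_of => x; rewrite !inE => /orP[]/eqP->; apply/negP => /notin;
      by rewrite eqxx ?andbF.
    - rewrite disjoint_sym; apply: disj_of => x; rewrite !inE => /orP[]/eqP->; apply/negP => /notin;
      by rewrite eqxx ?andbF.
    - exact: hdis.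
  split.
    move=> j jJ; case: ifP => [/eqP ji|ji]; first by move: jJ; rewrite ji iJ.
    by apply: hout; rewrite !inE ji.
  split.
    move=> j jJ tj; case: ifP => [/eqP ji|ji]; last by apply: h0; rewrite // !inE ji.
    by exists e1, e2; split => //; rewrite eq_sym.
  move=> j jJ tj; case: ifP => [/eqP ji|ji]; first by move: tj; rewrite ji t1i.
  by apply: h1'; rewrite // !inE ji.
-
  have t0i : t0 i = false by apply/negbTE/negP => /h01; apply.
  rewrite t0i in E0; rewrite ti in E1.
  have [pa fpa] := hfb1 i ti.
  have Epa := Ep pa; rewrite /= ti fpa /= in Epa.
  have h2pa := h2 pa.
  have s1p2' : forall r r', r != r' -> cntP J (fun i => t1 i && fb i r) +
    cntP J (fun i => t1 i && fb i r') <= cntP J t1.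
    move=> r r' nr; apply: (leq_trans (s1p2 r r' nr)); apply: cntP_mono => x _ /andP[] //.
  have [e eAv [nepa etight]] : exists2 e, e \in Av & (pr e != pa /\ forall r, r != pa ->
      cntP J t0 + cntP J (fun i => t1 i && fb i r) + cntP Av (fun e => pr e == r) = #|Av| -> r = pr e).
    case: (pickP (fun r => (r != pa) && (cntP J t0 + cntP J (fun i => t1 i && fb i r) + cntP Av (fun e => pr e == r) == #|Av|))) => [r /andP[nr /eqP tr]|none].
    + have capr : 0 < cntP Av (fun e => pr e == r).
        have := s1p2' r pa nr; lia.
      have [e eAv /eqP pe] := cntP_pos capr; exists e => //; split; first by rewrite pe.
      move=> r' nr' tr'; rewrite pe; apply/eqP; apply: contraT => nrr'.
      have := s1p3 r' r pa nrr' ltac:(by rewrite eq_sym nr') ltac:(by rewrite eq_sym nr).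
      have := cap2' r r' ltac:(by rewrite eq_sym nrr'). lia.
    + have : cntP Av (fun e => pr e == pa) < #|Av| by lia.
      case/cntP_lt => e eAv ne; exists e => //; split => // r nr tr.
      by have := none r; rewrite nr tr eqxx.
  have CAv : #|Av| = #|Av :\ e| + 1 by rewrite (cardsD1 e Av) eAv addnC.
  have H2' : forall r, cntP (J :\ i) t0 + cntP (J :\ i) (fun i => t1 i && fb i r) + cntP (Av :\ e) (fun e => pr e == r) <= #|Av :\ e|.
    move=> r; have := cntP_D1 (fun e => pr e == r) eAv; have := Ep r; have := h2 r.
    rewrite /= ti /=.
    case: (eqVneq (pr e) r) => [<-|ne1]; first by lia.
    case: (eqVneq r pa) => [->|ne2]; first by rewrite fpa; lia.
    have nt := etight r ne2.
    have -> : fb i r = false.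
      by apply/negbTE/negP => fr; move: ne2; rewrite (hfb i r pa ti fr fpa) eqxx.
    move=> H2r Er Ecr.
    have : cntP J t0 + cntP J (fun i => t1 i && fb i r) + cntP Av (fun e => pr e == r) != #|Av|.
      by apply/eqP => /nt Eq; move: ne1; rewrite Eq eqxx.
    lia.
  have [X [hsub [hdis [hout [h0 h1']]]]] := IH (J :\ i) hm' (Av :\ e) hJ' ltac:(lia) H2'.
  have notin : forall j, e \notin X j.
    by move=> j; apply/negP => /(subsetP (hsub j)); rewrite !inE eqxx.
  exists (fun j => if j == i then [set e] else X j); split.
    move=> j; case: ifP => _; first by rewrite sub1set.
    exact: subset_trans (hsub j) (subD1set _ _).
  split.
    move=> j j' njj'; case: ifP => [/eqP ji|ji]; case: ifP => [/eqP j'i|j'i].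
    - by move: njj'; rewrite ji j'i eqxx.
    - by rewrite disjoints1.
    - by rewrite disjoint_sym disjoints1.
    - exact: hdis.
  split.
    move=> j jJ; case: ifP => [/eqP ji|ji]; first by move: jJ; rewrite ji iJ.
    by apply: hout; rewrite !inE ji.
  split.
    move=> j jJ tj; case: ifP => [/eqP ji|ji]; first by move: tj; rewrite ji t0i.
    by apply: h0; rewrite // !inE ji.
  move=> j jJ tj; case: ifP => [/eqP ji|ji]; last by apply: h1'; rewrite // !inE ji.
  exists e; split => //; subst j; apply/negP => fe.
  by move: nepa; rewrite (hfb i _ _ ti fe fpa) eqxx.
Qed.


Lemma joinsC n mu (e : edge n mu) u v : joins e u v = joins e v u.
Proof. by rewrite /joins orbC. Qed.

Lemma joins_sorted n mu (e : edge n mu) (u v : 'I_n) :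
  valid_edge e -> (u < v)%N -> joins e u v = (e.1 == (u, v)).
Proof.
case: e => [[a b] j]; rewrite /valid_edge /joins /= xpair_eqE => ab uv.
case: (boolP ((a == v) && (b == u))) => [/andP[/eqP ea /eqP eb]|]; last by rewrite orbF.
by exfalso; subst; lia.
Qed.

Lemma ord2 (t : 'I_2) : t = ord0 \/ t = ord_max.
Proof. by case: t => [[|[|t]] Ht]; [left|right|]; try apply: val_inj. Qed.

Lemma cyc2 n mu (S : {set edge n mu}) x y :
  x \in S -> y \in S -> x != y -> valid_edge x -> x.1 = y.1 -> has_cycle S.
Proof.
move=> xS yS nxy vx exy.
exists 0, (fun i : 'I_2 => if i == ord0 then x.1.1 else x.1.2),
  (fun i : 'I_2 => if i == ord0 then x else y).
have o1 : ordS (ord_max : 'I_2) = ord0 by apply: val_inj.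
have o0 : ordS (ord0 : 'I_2) = ord_max by apply: val_inj.
have m0 : ((ord_max : 'I_2) == ord0) = false by [].
split.
  move=> i j; case: (ord2 i) => ->; case: (ord2 j) => -> //=; rewrite ?m0 ?eqxx => E;
  by move: vx; rewrite /valid_edge; have := congr1 (@nat_of_ord n) E; lia.
split.
  move=> i j; case: (ord2 i) => ->; case: (ord2 j) => -> //=; rewrite ?m0 ?eqxx => E;
  by move: nxy; rewrite E eqxx.
move=> i; case: (ord2 i) => ->; rewrite ?o0 ?o1 /= ?m0 ?eqxx; split => //.
  by rewrite /joins !eqxx.
by rewrite /joins -exy !eqxx orbT.
Qed.

Lemma joins_valid n mu (e f : edge n mu) a b :
  valid_edge e -> valid_edge f -> joins e a b -> joins f a b -> e.1 = f.1.
Proof.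
case: e => [[e1 e2] ej]; case: f => [[f1 f2] fj]; rewrite /valid_edge /joins /=.
move=> he hf /orP[]/andP[/eqP ? /eqP ?] /orP[]/andP[/eqP ? /eqP ?]; subst => //; lia.
Qed.

Lemma nocyc2 n mu (x y : edge n mu) :
  valid_edge x -> valid_edge y -> x.1 != y.1 -> ~ has_cycle [set x; y].
Proof.
move=> vx vy nxy [m [vs [es [ivs [ies H]]]]].
have hm : (m.+2 <= 2)%N.
  have <- : #|[set es i | i in [set: 'I_m.+2]]| = m.+2 by rewrite card_imset // cardsT card_ord.
  have c2 : (#|[set x; y]| <= 2)%N by rewrite cards2; case: (x != y).
  apply: (leq_trans _ c2); apply: subset_leq_card.
  by apply/subsetP => z /imsetP[i _ ->]; case: (H i).
case: m vs es ivs ies H hm => [|m] // vs es ivs ies H _.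
have vS : forall z, z \in [set x; y] -> valid_edge z by move=> z; rewrite !inE => /orP[]/eqP->.
case: (H ord0) => h0 j0; case: (H ord_max) => h1 j1.
have o1 : ordS (ord_max : 'I_2) = ord0 by apply: val_inj.
rewrite o1 joinsC in j1.
have o0 : ordS (ord0 : 'I_2) = ord_max by apply: val_inj.
rewrite o0 in j0.
have E := joins_valid (vS _ h0) (vS _ h1) j0 j1.
have ne : es ord0 != es ord_max by apply/eqP => /ies.
move: h0 h1 ne E; rewrite !inE => /orP[]/eqP-> /orP[]/eqP->; rewrite ?eqxx // => _ E.
  by move: nxy; rewrite E eqxx.
by move: nxy; rewrite E eqxx.
Qed.

Lemma deg_le_card n mu (S : {set edge n mu}) v : (deg S v <= #|S|)%N.
Proof. by apply: subset_leq_card; apply/subsetP => e; rewrite inE => /andP[]. Qed.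


Definition Pairs n := [set p : 'I_n * 'I_n | (p.1 < p.2)%N].

Lemma Av_eq n mu lam : fullK n mu :\: lamK n mu lam =
  setX (Pairs n) [set j : 'I_mu | (lam <= j)%N].
Proof.
apply/setP => [[p j]]; rewrite !inE /valid_edge /= ltn_ord andbT.
by case: (p.1 < p.2)%N; rewrite /= ?andbT // ltnNge negbK.
Qed.

Lemma card_geq mu lam : (lam <= mu)%N -> #|[set j : 'I_mu | (lam <= j)%N]| = mu - lam.
Proof.
move=> hle.
have E : [set j : 'I_mu | (j < lam)%N] = widen_ord hle @: [set: 'I_lam].
  apply/setP => j; rewrite inE; apply/idP/imsetP => [jl|[i _ ->]].
    by exists (Ordinal jl) => //; apply: val_inj.
  by rewrite /= ltn_ord.
have C := cardsC [set j : 'I_mu | (j < lam)%N].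
have -> : [set j : 'I_mu | (lam <= j)%N] = ~: [set j : 'I_mu | (j < lam)%N].
  by apply/setP => j; rewrite !inE leqNgt.
move: C; rewrite E card_imset ?cardsT ?card_ord; last by move=> a b /(congr1 val) /= Eab; apply: val_inj.
lia.
Qed.

Lemma card_pairs n : #|Pairs n| * 2 + n = n * n.
Proof.
pose P2 := [set p : 'I_n * 'I_n | (p.2 < p.1)%N].
pose D := [set p : 'I_n * 'I_n | p.1 == p.2].
have c2 : #|P2| = #|Pairs n|.
  have -> : P2 = (fun p => (p.2, p.1)) @: Pairs n.
    apply/setP => [[a b]]; rewrite inE; apply/idP/imsetP => [h|[[c d] h [-> ->]]].
      by exists (b, a); rewrite ?inE.
    by move: h; rewrite inE.
  by apply: card_imset => [[a b] [c d]] /= [-> ->].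
have cD : #|D| = n.
  have -> : D = (fun u => (u, u)) @: [set: 'I_n].
    apply/setP => [[a b]]; rewrite inE; apply/idP/imsetP => [/eqP /= ->|[c _ [-> ->]]] //.
    by exists b; rewrite ?inE.
  by rewrite card_imset ?cardsT ?card_ord // => a b [].
have cT : #|[set: 'I_n * 'I_n]| = n * n by rewrite cardsT card_prod card_ord.
have U : [set: 'I_n * 'I_n] = Pairs n :|: (P2 :|: D).
  apply/setP => [[a b]]; rewrite !inE /=; case: (ltngtP a b) => //= h.
  by symmetry; apply/eqP; apply: val_inj.
have I1 : P2 :&: D = set0.
  apply/setP => [[a b]]; rewrite !inE /=; apply/negbTE/negP => /andP[h /eqP E].
  by move: h; rewrite E ltnn.
have I2 : Pairs n :&: (P2 :|: D) = set0.
  apply/setP => [[a b]]; rewrite !inE /=; apply/negbTE/negP => /andP[h /orP[h'|/eqP E]].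
    lia.
  by move: h; rewrite E ltnn.
have := cardsUI P2 D; have := cardsUI (Pairs n) (P2 :|: D).
rewrite I1 I2 -U cards0 cT c2 cD; lia.
Qed.

Lemma card_Av n mu lam : (lam <= mu)%N ->
  #|fullK n mu :\: lamK n mu lam| = (mu - lam) * ((n * (n - 1)) %/ 2).
Proof.
move=> hle; rewrite Av_eq cardsX card_geq // mulnC; congr (_ * _).
have := card_pairs n; rewrite mulnBr muln1; lia.
Qed.

Lemma cap_Av n mu lam (p : 'I_n * 'I_n) : (lam <= mu)%N -> (p.1 < p.2)%N ->
  cntP (fullK n mu :\: lamK n mu lam) (fun e => e.1 == p) = mu - lam.
Proof.
move=> hle hp; rewrite /cntP Av_eq.
have -> : [set e in setX (Pairs n) [set j : 'I_mu | (lam <= j)%N] | e.1 == p] =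
    setX [set p] [set j : 'I_mu | (lam <= j)%N].
  apply/setP => [[q j]]; rewrite !inE /=.
  by case: (eqVneq q p) => [->|ne]; rewrite ?hp ?eqxx ?andbT ?andbF.
by rewrite cardsX cards1 mul1n card_geq.
Qed.

Lemma cap_Av0 n mu lam (p : 'I_n * 'I_n) : ~~ (p.1 < p.2)%N ->
  cntP (fullK n mu :\: lamK n mu lam) (fun e => e.1 == p) = 0.
Proof.
move=> hp; apply/eqP; rewrite /cntP Av_eq cards_eq0; apply/eqP/setP => [[q j]].
rewrite !inE /=; case: (eqVneq q p) => [->|]; by rewrite ?(negbTE hp) ?andbF.
Qed.


Lemma AvP n mu lam (x : edge n mu) : x \in fullK n mu :\: lamK n mu lam ->
  valid_edge x /\ x \notin lamK n mu lam.
Proof. by rewrite !inE => /andP[-> /andP[-> _]]. Qed.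

Theorem proposition2 (n lam mu : nat) (hn : (0 < n)%N) (hlam : (0 < lam)%N)
    (hmu : (lam < mu)%N) (k : nat) (A : 'I_k -> {set edge n mu})
    (hA : strong_path_decomposition (lamK n mu lam) A) :
  strongly_extendible 2 (lamK n mu lam) (fullK n mu) A <->
  ((2 * nS 0 A + nS 1 A <= (mu - lam) * ((n * (n - 1)) %/ 2))%N /\
   (forall u v : 'I_n, u != v ->
      (nS 0 A + nS1uv A u v <= (mu - lam) * ((n * (n - 1)) %/ 2 - 1))%N)).
Proof.
have hle : (lam <= mu)%N by exact: ltnW.
move: (hA) => [[[hdisA hunA] hdeg] hcyc].
have AG : forall i, A i \subset lamK n mu lam.
  by move=> i; apply/subsetP => e ei; apply/hunA; exists i.
have Avalid : forall i e, e \in A i -> valid_edge e.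
  by move=> i e /(subsetP (AG i)); rewrite inE => /andP[].
pose J := [set i | (#|A i| <= 1)%N].
have cnt0 : cntP J (fun i => #|A i| == 0) = nS 0 A.
  by apply: eq_card => i; rewrite !inE; case: #|A i| => [|[|]].
have cnt1 : cntP J (fun i => #|A i| == 1) = nS 1 A.
  by apply: eq_card => i; rewrite !inE; case: #|A i| => [|[|]].
have cnt1p : forall u v : 'I_n, (u < v)%N ->
    cntP J (fun i => (#|A i| == 1) && [exists e in A i, e.1 == (u, v)]) = nS1uv A u v.
  move=> u v huv; apply: eq_card => i; rewrite !inE.
  case: (boolP (#|A i| == 1)) => [t|]; last by rewrite !andbF.
  have [a Ea] := cards1P t; rewrite /=.
  have va : valid_edge a by apply: (Avalid i); rewrite Ea inE.
  rewrite (eqP t) /= Ea; apply/existsP/forallP => [[e /andP[]]|h].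
    rewrite inE => /eqP -> ha x; apply/implyP; rewrite inE => /eqP ->.
    by rewrite joins_sorted.
  exists a; rewrite inE eqxx /= -(joins_sorted va huv).
  by have := h a; rewrite inE eqxx.
split.
- move=> [F [As [hF [[[[hdisS hunS] hdegS] hcycS] [hIG h2]]]]].
  pose Av := fullK n mu :\: lamK n mu lam.
  pose Y := fun i => As i :\: lamK n mu lam.
  have AsV : forall i x, x \in As i -> valid_edge x.
    move=> i x xA; have : x \in lamK n mu lam :|: F by apply/hunS; exists i.
    rewrite in_setU => /orP[|/(subsetP hF)/AvP[] //].
    by rewrite inE => /andP[].
  have YAv : forall i, Y i \subset Av.
    move=> i; apply/subsetP => x; rewrite in_setD => /andP[xG xA].
    have : x \in lamK n mu lam :|: F by apply/hunS; exists i.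
    rewrite in_setU (negbTE xG) /= => /(subsetP hF) //.
  have Ydis : forall i j, i != j -> [disjoint Y i & Y j].
    move=> i j nij; apply: disj_of => x; rewrite !in_setD => /andP[_ xi].
    by apply/negP => /andP[_ xj]; rewrite (disjointFr (hdisS i j nij) xi) in xj.
  have Ycard : forall i, #|Y i| + #|A i| = #|As i|.
    by move=> i; rewrite -(cardsID (lamK n mu lam) (As i)) hIG addnC.
  have bigAv : forall (T : {set 'I_k}) (Z : 'I_k -> {set edge n mu}),
      (forall i, Z i \subset Y i) -> (#|\bigcup_(i in T) Z i| <= #|Av|)%N.
    move=> T Z hZ; apply: subset_leq_card; apply/bigcupsP => i _.
    exact: subset_trans (hZ i) (YAv i).
  split.
    have := pack (P := fun i => #|A i| == 0) Ydis (T := J) _.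
    have -> : cntP J (fun i => ~~ (#|A i| == 0)) = nS 1 A.
      by apply: eq_card => i; rewrite !inE; case: #|A i| => [|[|]].
    rewrite cnt0 => /(_ _) H.
    rewrite -card_Av //; apply: leq_trans (H _) (bigAv J Y (fun i => subxx _)).
    move=> i; rewrite inE => iJ; have := h2 i; rewrite -Ycard => hh; split; first by move/eqP => Ez; rewrite Ez in hh; lia.
    lia.
  have key : forall u v : 'I_n, (u < v)%N ->
      (nS 0 A + nS1uv A u v <= (mu - lam) * ((n * (n - 1)) %/ 2 - 1))%N.
    move=> u v huv.
    pose T := [set i | (#|A i| == 0) || ((#|A i| == 1) && [forall e in A i, joins e u v])].
    pose Z := fun i => [set x in Y i | x.1 != (u, v)].
    have Zdis : forall i j, i != j -> [disjoint Z i & Z j].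
      move=> i j nij; apply: disj_of => x; rewrite inE => /andP[xi _].
      by apply/negP; rewrite inE => /andP[xj _]; rewrite (disjointFr (Ydis i j nij) xi) in xj.
    have := pack (P := fun _ => false) Zdis (T := T) _.
    have -> : cntP T (fun _ => false) = 0.
      by apply/eqP; rewrite cards_eq0; apply/eqP/setP => x; rewrite !inE andbF.
    have -> : cntP T (fun i => ~~ false) = nS 0 A + nS1uv A u v.
      have -> : cntP T (fun i => ~~ false) = #|T| by apply: eq_card => i; rewrite !inE andbT.
      rewrite -(cntP_C T (fun i => #|A i| == 0)).
      congr (_ + _); apply: eq_card => i; rewrite !inE.
        by case: (#|A i| == 0); rewrite /= ?andbF.
      by case: #|A i| => [|[|m]] /=; rewrite ?andbT ?andbF.
    move=> /(_ _) H.
    have ZAv : (#|\bigcup_(i in T) Z i| <= cntP Av (fun e => e.1 != (u, v)))%N.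
      apply: subset_leq_card; apply/bigcupsP => i _; apply/subsetP => x.
      rewrite !inE => /andP[xY ->]; rewrite andbT.
      by have := subsetP (YAv i) x; rewrite !inE xY => /(_ isT).
    have CC := cntP_C Av (fun e => e.1 == (u, v)).
    rewrite cap_Av // card_Av // in CC.
    rewrite mulnBr muln1.
    apply: leq_trans (H _) _.
      move=> i; rewrite !inE => /orP[t0|/andP[t1 hj]]; split => //.
      + have : (1 < #|Y i|)%N by have := h2 i; rewrite -Ycard (eqP t0); lia.
        case/card_gt1P => x [y [xY yY nxy]].
        apply/card_gt0P; case: (eqVneq x.1 (u, v)) => ex; last by exists x; rewrite inE xY.
        case: (eqVneq y.1 (u, v)) => ey; last by exists y; rewrite inE yY.
        exfalso; apply: (hcycS i); apply: (cyc2 (x := x) (y := y)) => //.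
        * by move: xY; rewrite in_setD => /andP[].
        * by move: yY; rewrite in_setD => /andP[].
        * by apply: (AsV i); move: xY; rewrite in_setD => /andP[].
        * by rewrite ex ey.
      + have [a Ea] := cards1P t1.
        have aAs : a \in As i.
          by have := subsetIl (As i) (lamK n mu lam); rewrite hIG Ea sub1set.
        have va : valid_edge a by apply: (Avalid i); rewrite Ea inE.
        have aG : a \in lamK n mu lam by apply: (subsetP (AG i)); rewrite Ea inE.
        have ea : a.1 == (u, v).
          by rewrite -joins_sorted //; move/forall_inP: hj; apply; rewrite Ea inE.
        have : (0 < #|Y i|)%N by have := h2 i; rewrite -Ycard (eqP t1); lia.
        case/card_gt0P => x xY; apply/card_gt0P; exists x; rewrite inE xY /=.
        apply/negP => /eqP ex; apply: (hcycS i); apply: (cyc2 (x := a) (y := x)) => //.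
        * by move: xY; rewrite in_setD => /andP[].
        * by apply/eqP => Eax; move: xY; rewrite -Eax in_setD aG.
        * by rewrite ex (eqP ea).
    move: (ZAv) CC; rewrite /cntP; lia.
  move=> u v nuv; case: (ltngtP u v) => huv.
  - exact: key.
  - have := key v u huv; congr (_ <= _)%N; congr (_ + _).
    by apply: eq_card => i; rewrite !inE; congr (_ && _); apply: eq_forallb => e; rewrite joinsC.
  - by move: nuv; rewrite (val_inj huv) eqxx.
- move=> [B1 B2].
  have H1 : (2 * cntP J (fun i => #|A i| == 0) + cntP J (fun i => #|A i| == 1) <=
      #|fullK n mu :\: lamK n mu lam|)%N by rewrite cnt0 cnt1 card_Av.
  have H2 : forall p, (cntP J (fun i => #|A i| == 0) +
      cntP J (fun i => (#|A i| == 1) && [exists e in A i, e.1 == p]) +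
      cntP (fullK n mu :\: lamK n mu lam) (fun e => e.1 == p) <= #|fullK n mu :\: lamK n mu lam|)%N.
    move=> [u v]; case: (ltnP u v) => huv.
      rewrite cnt1p // cap_Av // cnt0 card_Av //.
      have nuv : u != v by apply/eqP => E; move: huv; rewrite E ltnn.
      have := B2 u v nuv.
      have N1 : (0 < (n * (n - 1)) %/ 2)%N.
        have : (2 <= n)%N by apply: (leq_ltn_trans _ (ltn_ord v)); lia.
        move=> h2; rewrite divn_gt0 //; nia.
      have : (mu - lam <= (mu - lam) * ((n * (n - 1)) %/ 2))%N by rewrite leq_pmulr.
      rewrite mulnBr muln1; lia.
    rewrite cap_Av0 /= -?leqNgt // cnt0.
    have h1 : (cntP J (fun i => (#|A i| == 1) && [exists e in A i, e.1 == (u, v)]) <=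
        cntP J (fun i => #|A i| == 1))%N by apply: cntP_mono => x _ /andP[].
    rewrite cnt1 in h1; rewrite card_Av //; rewrite addn0; apply: leq_trans (leq_add (leqnn _) h1) _; move: B1; set M := (mu - lam) * _; lia.
  have h01 : forall i, #|A i| == 0 -> #|A i| == 1 -> False by move=> i /eqP->.
  have hfb : forall i p q, #|A i| == 1 -> [exists e in A i, e.1 == p] ->
      [exists e in A i, e.1 == q] -> p = q.
    move=> i p q /cards1P[a ->] /existsP[e] /andP[ea /eqP ep] /existsP[e'] /andP[ea' /eqP eq'].
    move: ea ea'; rewrite !inE => /eqP ea /eqP ea'.
    by rewrite -ep -eq' ea ea'.
  have hfb1 : forall i, #|A i| == 1 -> exists p, [exists e in A i, e.1 == p].
    move=> i /cards1P[a ->]; exists a.1; apply/existsP; exists a; by rewrite !inE !eqxx.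
  have hJ : forall i, i \in J -> (#|A i| == 0) || (#|A i| == 1).
    by move=> i; rewrite inE; case: #|A i| => [|[|]].
  have [X [hXsub [hXdis [hXout [hX0 hX1]]]]] :=
    extend_gen (pr := fun e : edge n mu => e.1) h01 hfb hfb1 hJ H1 H2.
  have XG : forall i x, x \in X i -> valid_edge x /\ x \notin lamK n mu lam.
    by move=> i x /(subsetP (hXsub i)) /AvP.
  have pairJ : forall i, i \in J -> exists x y, A i :|: X i = [set x; y] /\
      valid_edge x /\ valid_edge y /\ x.1 != y.1.
    move=> i iJ; case/orP: (hJ i iJ) => ti.
      have [e1 [e2 [E ne]]] := hX0 i iJ ti; exists e1, e2.
      rewrite E (cards0_eq (eqP ti)) set0U; split => //.
      split; first by apply: (proj1 (XG i e1 _)); rewrite E !inE eqxx.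
      split => //; by apply: (proj1 (XG i e2 _)); rewrite E !inE eqxx orbT.
    have [e [E nf]] := hX1 i iJ ti; have [a Ea] := cards1P ti; exists a, e.
    rewrite Ea E; split => //.
    split; first by apply: (Avalid i); rewrite Ea inE.
    split; first by apply: (proj1 (XG i e _)); rewrite E !inE.
    rewrite Ea /= in nf; apply: contraNneq nf => h; apply/existsP; exists a.
    by rewrite h !inE !eqxx.
  have nJ : forall i, i \notin J -> A i :|: X i = A i.
    by move=> i iJ; rewrite hXout // setU0.
  exists (\bigcup_i X i), (fun i => A i :|: X i).
  split.
    by apply/bigcupsP => i _; exact: hXsub.
  split.
    split.
      split.
        split.
          move=> i j nij; apply: disj_of => x; rewrite !inE => /orP[xA|xX];
            apply/negP => /orP[xA'|xX'].
          - by rewrite (disjointFr (hdisA i j nij) xA) in xA'.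
          - by case: (XG j x xX'); rewrite (subsetP (AG i)).
          - by case: (XG i x xX); rewrite (subsetP (AG j)).
          - by rewrite (disjointFr (hXdis i j nij) xX) in xX'.
        move=> e; rewrite in_setU; split.
          case/orP => [/(proj1 (hunA _)) [i ei] | /bigcupP [i _ ei]]; exists i; by rewrite inE ei ?orbT.
        move=> [i]; rewrite inE => /orP[ei|ei].
          by apply/orP; left; apply/hunA; exists i.
        by apply/orP; right; apply/bigcupP; exists i.
      move=> i v; case: (boolP (i \in J)) => iJ; last by rewrite nJ.
      have [x [y [-> _]]] := pairJ i iJ.
      apply: leq_trans (deg_le_card _ _) _; rewrite cards2; by case: (x != y).
    move=> i; case: (boolP (i \in J)) => iJ; last by rewrite nJ.
    have [x [y [-> [vx [vy nxy]]]]] := pairJ i iJ.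
    exact: nocyc2.
  split.
    move=> i; rewrite setIUl (setIidPl (AG i)).
    have -> : X i :&: lamK n mu lam = set0.
      apply/setP => x; rewrite in_setI in_set0; apply/negbTE/negP => /andP[xX xG].
      by case: (XG i x xX); rewrite xG.
    by rewrite setU0.
  move=> i; case: (boolP (i \in J)) => iJ.
    have [x [y [-> [vx [vy nxy]]]]] := pairJ i iJ.
    rewrite cards2; case: eqP => // E; by move: nxy; rewrite E eqxx.
  by rewrite nJ //; move: iJ; rewrite inE -ltnNge.
Qed.
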